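(* Let $m\ge1$ and $m_0\in\{0,\dots,m\}$. Let $\mathbf p=(p_1,\dots,p_m)$ have joint distribution $P$ such that $p_1,\dots,p_{m_0}$ are mutually independent and each satisfies $P(p_i\le x)\le x$ for all $x\in[0,1]$ (the remaining $p$-values having arbitrary joint distribution, possibly dependent on the first ones). Let $\delta$ be a multiple testing procedure rejecting exactly the hypotheses $i$ with $p_i\le t^*(\mathbf p)$, where $t^*:[0,1]^m\to[0,1]$ is measurable and nonincreasing in each coordinate. Let $\phi:\mathbb N\to\mathbb R$ be nondecreasing, and set $R(P,\delta)=\mathbb E_{\mathbf p\sim P}[\phi(V_m(\delta(\mathbf p)))]$. Then $R(P,\delta)\le R(\mathrm{DU}(m,m_0),\delta)$.
   Context: $V_m(\delta(\mathbf p))=|\{1\le i\le m_0: p_i\le t^*(\mathbf p)\}|$ is the number of rejected true null hypotheses, hypotheses $1,\dots,m_0$ being the true nulls. $\mathrm{DU}(m,m_0)$ is the Dirac-uniform distribution: $p_1,\dots,p_{m_0}$ i.i.d. uniform on $(0,1)$ and $p_i=0$ almost surely for $m_0<i\le m$. (Example: $\phi(v)=\mathbf 1\{v\ge k\}$ gives the $k$-FWER.) *)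

(* Defs.v *)
From HB Require Import structures.
From mathcomp Require Import all_boot all_order all_algebra.
From mathcomp Require Import all_classical all_reals all_analysis.
Set Implicit Arguments. Unset Strict Implicit. Unset Printing Implicit Defensive.
Import Order.TTheory GRing.Theory Num.Theory.
Local Open Scope classical_set_scope.
Local Open Scope ring_scope.

(* p-value vectors are m-tuples of reals, with the product (Borel) sigma-algebra
   provided by MathComp-Analysis on [n.-tuple R]. *)

Definition cube {R : realType} (m : nat) : set (m.-tuple R) :=
  [set x | forall i : 'I_m, 0 <= tnth x i <= 1].
Arguments cube {R} m.

Definition first_coords_indep {R : realType} (m m0 : nat)
    (P : probability (m.-tuple R) R) : Prop :=
  forall (S : {set 'I_m}) (B : 'I_m -> set R),
    (forall i, measurable (B i)) ->
    (forall i, i \in S -> (i < m0)%N) ->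
    P [set x | forall i, i \in S -> B i (tnth x i)] =
    (\prod_(i in S) P [set x | B i (tnth x i)])%E.

(* Number of rejected true nulls (nulls are coordinates 0..m0-1) by the
   step procedure with threshold t: V(x) = #{ i < m0 : x_i <= t(x) }. *)
Definition Vrej {R : realType} (m m0 : nat) (t : m.-tuple R -> R)
    (x : m.-tuple R) : nat :=
  #|[set i : 'I_m | (i < m0)%N && (tnth x i <= t x)]|.

Definition risk {R : realType} (m m0 : nat) (phi : nat -> R)
    (t : m.-tuple R -> R) (P : probability (m.-tuple R) R) : \bar R :=
  (\int[P]_(x in cube m) (phi (Vrej m0 t x))%:E)%E.

(* Q is the Dirac-uniform distribution DU(m, m0): coordinates < m0 are
   i.i.d. uniform on (0,1), coordinates >= m0 are a.s. equal to 0.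
   These conditions determine Q uniquely. *)
Definition is_DU {R : realType} (m m0 : nat) (Q : probability (m.-tuple R) R)
  : Prop :=
  [/\ first_coords_indep m0 Q,
      (forall i : 'I_m, (i < m0)%N -> forall u : R, 0 <= u <= 1 ->
         Q [set x | tnth x i <= u] = u%:E) &
      (forall i : 'I_m, (m0 <= i)%N -> Q [set x | tnth x i = 0] = 1%E)].

(* Main.v *)
Require Import Defs.
From HB Require Import structures.
From mathcomp Require Import all_boot all_order all_algebra.
From mathcomp Require Import all_classical all_reals all_analysis.
From mathcomp Require Import measurable_realfun lra.
Import Order.TTheory GRing.Theory Num.Theory.
Local Open Scope classical_set_scope.
Local Open Scope ring_scope.
Set Implicit Arguments. Unset Strict Implicit. Unset Printing Implicit Defensive.

Section KL.
Variable R : realType.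

Definition cyl n (B : 'I_n -> set R) : set (n.-tuple R) :=
  [set x | forall i, B i (tnth x i)].
Arguments cyl {n}.

Lemma cyl_measurable n (B : 'I_n -> set R) : (forall i, measurable (B i)) ->
  measurable (cyl B).
Proof.
move=> mB.
have -> : cyl B = \bigcap_(i in [set: 'I_n]) [set x : n.-tuple R | B i (tnth x i)].
  apply/seteqP; split => x /=; first by move=> Bx i _; exact: Bx.
  by move=> H i; exact: H.
apply: fin_bigcap_measurable; first exact: finite_finset.
move=> i _; rewrite -[X in measurable X]setTI; exact: measurable_tnth.
Qed.

Definition cyls n : set (set (n.-tuple R)) :=
  [set A | exists B : 'I_n -> set R, (forall i, measurable (B i)) /\ A = cyl B].

Lemma cyls_gen n : measurable = <<s @cyls n >>.
Proof.
apply/seteqP; split.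
- rewrite {1}/measurable /=.
  apply: smallest_sub; first exact: smallest_sigma_algebra.
  move=> A; rewrite -bigcup_seq /= => -[i _ [Y mY <-]].
  apply: sub_sigma_algebra.
  exists (fun j => if j == i then Y else setT); split.
    by move=> j; case: ifP.
  apply/seteqP; split => x /=.
    by move=> [_ Yx] j; case: eqP => [->|].
  by move=> H; split => //; move: (H i); rewrite eqxx.
- apply: smallest_sub; first exact: sigma_algebra_measurable.
  by move=> _ [B [mB ->]]; exact: cyl_measurable.
Qed.

Lemma cyls_setI n : setI_closed (@cyls n).
Proof.
move=> _ _ [B [mB ->]] [C [mC ->]].
exists (fun i => B i `&` C i); split; first by move=> i; exact: measurableI.
apply/seteqP; split => x /=.
  by move=> [Bx Cx] i; split; [exact: Bx|exact: Cx].
by move=> H; split => i; have [] := H i.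
Qed.

Lemma cylT n : cyl (fun _ : 'I_n => setT) = setT.
Proof. by apply/seteqP; split. Qed.


Definition thd n (x : n.+1.-tuple R) : R := thead x.
Definition btl n (x : n.+1.-tuple R) : n.-tuple R := [tuple of behead x].
Definition consf n (p : R * n.-tuple R) : n.+1.-tuple R := [tuple of p.1 :: p.2].

Lemma thd_meas n : measurable_fun setT (@thd n).
Proof. exact: measurable_tnth. Qed.
Lemma btl_meas n : measurable_fun setT (@btl n).
Proof. exact: measurable_behead. Qed.
Lemma consf_meas n : measurable_fun setT (@consf n).
Proof. exact: measurable_cons. Qed.

HB.instance Definition _ n := isMeasurableFun.Build _ _ _ _ (@thd n) (@thd_meas n).
HB.instance Definition _ n := isMeasurableFun.Build _ _ _ _ (@btl n) (@btl_meas n).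
HB.instance Definition _ n := isMeasurableFun.Build _ _ _ _ (@consf n) (@consf_meas n).

Lemma tnth_btl n (x : n.+1.-tuple R) j : tnth (btl x) j = tnth x (lift ord0 j).
Proof. by rewrite [in RHS](tuple_eta x) tnthS. Qed.

Lemma tnth_consf0 n (p : R * n.-tuple R) : tnth (consf p) ord0 = p.1.
Proof. by []. Qed.

Lemma tnth_consfS n (p : R * n.-tuple R) j : tnth (consf p) (lift ord0 j) = tnth p.2 j.
Proof. by rewrite /consf tnthS. Qed.

Definition tindep n (mu : probability (n.-tuple R) R) :=
  forall B : 'I_n -> set R, (forall i, measurable (B i)) ->
    mu (cyl B) = (\prod_(i < n) mu [set x | B i (tnth x i)])%E.

Lemma distE d d' (T : measurableType d) (T' : measurableType d')
  (mu : probability T R) (X : {mfun T >-> T'}) A :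
  distribution mu X A = mu (X @^-1` A).
Proof. by []. Qed.

Lemma lift0ne n (j : 'I_n) : (lift ord0 j == ord0) = false.
Proof. by rewrite eq_sym (negbTE (neq_lift _ _)). Qed.

Lemma setT_prop T : [set _ : T | True] = setT.
Proof. by []. Qed.

Lemma tindep_btl n (mu : probability (n.+1.-tuple R) R) :
  tindep mu -> tindep (distribution mu (@btl n)).
Proof.
move=> hind B mB.
rewrite /distribution /pushforward; cbv beta.
transitivity (mu (cyl (fun i : 'I_n.+1 => if i == ord0 then setT else
            [set a | forall j, i = lift ord0 j -> B j a]))).
  congr (mu _); apply/seteqP; split => x /=.
    move=> Bx i; case: eqP => // /eqP i0 j ->; rewrite -tnth_btl; exact: Bx.
  move=> H j; rewrite tnth_btl; have := H (lift ord0 j).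
  by rewrite lift0ne; apply.
rewrite hind; last first.
  move=> i; case: eqP => [_|/eqP i0]; first exact: measurableT.
  case: (unliftP ord0 i) => [j ij|i0']; last by rewrite i0' eqxx in i0.
  rewrite (_ : [set a | _] = B j); first exact: mB.
  apply/seteqP; split => a /=; first by apply; rewrite ij.
  by move=> Ba k; rewrite ij => /lift_inj <-.
rewrite big_ord_recl eqxx setT_prop probability_setT mul1e.
apply: eq_bigr => j _; rewrite lift0ne.
congr (mu _); apply/seteqP; split => x /=.
  by move=> H; rewrite tnth_btl; apply: H.
by move=> Bx k /lift_inj <-; rewrite -tnth_btl.
Qed.

Lemma decomp n (mu : probability (n.+1.-tuple R) R) : tindep mu ->
  forall D, measurable D ->
  mu D = ((distribution mu (@thd n)) \x (distribution mu (@btl n)))%E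
           (@consf n @^-1` D).
Proof.
move=> hind D mD.
pose m2 := distribution ((distribution mu (@thd n)) \x (distribution mu (@btl n)))%E (@consf n).
suff -> : mu D = m2 D by [].
apply: (measure_unique (@cyls n.+1) (fun=> setT)) => //.
- exact: cyls_gen.
- exact: cyls_setI.
- by move=> _; exists (fun=> setT); split => //; rewrite cylT.
- by rewrite bigcup_const.
- move=> _ [B [mB ->]].
  transitivity (\prod_(i < n.+1) mu [set x | B i (tnth x i)])%E; first exact: hind.
  rewrite /m2 /= /pushforward; cbv beta.
  symmetry; transitivity (((distribution mu (@thd n)) \x (distribution mu (@btl n)))%E
      (B ord0 `*` cyl (fun j => B (lift ord0 j)))).
    congr (_ _); apply/seteqP; split => -[a r] /=.
      by move=> H; split; [exact: (H ord0)|move=> j; have := H (lift ord0 j); rewrite tnth_consfS].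
    move=> [Ba Br] i; case: (unliftP ord0 i) => [j ->|->] //.
    by rewrite tnth_consfS; exact: Br.
  rewrite product_measure1E //; last exact: cyl_measurable.
  rewrite big_ord_recl; congr (_ * _)%E.
  etransitivity; first exact: (tindep_btl hind (fun j => mB (lift ord0 j))).
  apply: eq_bigr => j _; congr (mu _); apply/seteqP; split => x /=;
    by rewrite tnth_btl.
- by move=> _; apply: (@le_lt_trans _ _ 1%E); [exact: probability_le1|exact: ltry].
Qed.


Definition downR (A : set R) := forall a b, A a -> b <= a -> A b.
Definition downT n (D : set (n.-tuple R)) :=
  forall x y, D x -> (forall i, tnth y i <= tnth x i) -> D y.
Definition sdom n (mu nu : probability (n.-tuple R) R) :=
  forall i (A : set R), measurable A -> downR A ->
    (mu [set x | A (tnth x i)] <= nu [set x | A (tnth x i)])%E.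

Lemma sdom_btl n (mu nu : probability (n.+1.-tuple R) R) :
  sdom mu nu -> sdom (distribution mu (@btl n)) (distribution nu (@btl n)).
Proof.
move=> h i A mA dA; rewrite /= /pushforward.
have := h (lift ord0 i) A mA dA.
congr (_ <= _)%E; congr (_ _); apply/seteqP; split => x /=; by rewrite tnth_btl.
Qed.

Lemma consf_le n (a b : R) (r s : n.-tuple R) : b <= a ->
  (forall i, tnth s i <= tnth r i) ->
  forall i, tnth (consf (b, s)) i <= tnth (consf (a, r)) i.
Proof.
move=> ba sr i; case: (unliftP ord0 i) => [j ->|->] //.
by rewrite !tnth_consfS; exact: sr.
Qed.

Lemma KL n : forall mu nu : probability (n.-tuple R) R,
  tindep mu -> tindep nu -> sdom mu nu ->
  forall D, measurable D -> downT D -> (mu D <= nu D)%E.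
Proof.
elim: n => [|n IH] mu nu hmu hnu hd D mD dD.
  have [Dx|nDx] := pselect (D [tuple]).
    have -> : D = setT.
      apply/seteqP; split => // y _; apply: (dD [tuple]) => //.
      by move=> [].
    by rewrite !probability_setT.
  have -> : D = set0.
    apply/seteqP; split => // y Dy; apply: nDx; apply: (dD y) => //.
    by move=> [].
  by rewrite !measure0.
rewrite (decomp hmu mD) (decomp hnu mD).
set mu0 := distribution mu (@thd n).
set mur := distribution mu (@btl n).
set nu0 := distribution nu (@thd n).
set nur := distribution nu (@btl n).
set E := @consf n @^-1` D.
have mE : measurable E.
  by rewrite /E -[X in measurable X]setTI; exact: consf_meas.
rewrite (product_measure_unique (m' := (mu0 \x^ mur)%E) _ mE); last first.
  by move=> A B mA mB; exact: product_measure2E.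
rewrite (product_measure_unique (m' := (nu0 \x^ nur)%E) _ mE); last first.
  by move=> A B mA mB; exact: product_measure2E.
apply: (@le_trans _ _ ((nu0 \x^ mur) E)%E).
  apply: ge0_le_integral => //.
  - exact: measurable_fun_ysection.
  - exact: measurable_fun_ysection.
  move=> y _ /=.
  rewrite /mu0 /nu0 /= /pushforward.
  apply: hd.
    exact: measurable_ysection.
  move=> a b; rewrite /ysection /= !inE /E /= => Da ba.
  apply: (dD _ _ Da); apply: consf_le => //.
rewrite -(product_measure_unique (m1 := nu0) (m2 := mur) (m' := (nu0 \x^ mur)%E) _ mE); last first.
  by move=> A B mA mB; exact: product_measure2E.
rewrite -(product_measure_unique (m1 := nu0) (m2 := nur) (m' := (nu0 \x^ nur)%E) _ mE); last first.
  by move=> A B mA mB; exact: product_measure2E.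
apply: ge0_le_integral => //.
- exact: measurable_fun_xsection.
- exact: measurable_fun_xsection.
move=> a _ /=.
apply: IH.
- exact: tindep_btl.
- exact: tindep_btl.
- exact: sdom_btl.
- exact: measurable_xsection.
move=> r s; rewrite /xsection /= !inE /E /= => Dr sr.
by apply: (dD _ _ Dr); apply: consf_le.
Qed.

End KL.

Section OneD.
Variable R : realType.
Variables (d : measure_display) (T : measurableType d).

Lemma oneD (P Q : probability T R) (f : T -> R) :
  measurable_fun setT f ->
  (forall u, 0 <= u <= 1 -> (P [set x | (f x <= u)%R] <= u%:E)%E) ->
  P [set x | (f x < 0)%R] = 0%E ->
  (forall u, 0 <= u <= 1 -> Q [set x | f x <= u] = u%:E) ->
  forall A : set R, measurable A -> downR A ->
  (P [set x | A (f x)] <= Q [set x | A (f x)])%E.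
Proof.
move=> mf hPa hPb hQ A mA dA.
have mpre : forall B : set R, measurable B -> measurable [set x | B (f x)].
  by move=> B mB; rewrite -[X in measurable X]setTI; exact: mf.
have mle u : measurable [set x | f x <= u].
  exact: (mpre `]-oo, u]%classic).
have mlt u : measurable [set x | f x < u].
  exact: (mpre `]-oo, u[%classic).
have [[a Aa]|nA] := pselect (exists a, A a); last first.
  have -> : [set x | A (f x)] = set0.
    by apply/seteqP; split => // x /= Ax; apply: nA; exists (f x).
  by rewrite measure0 measure_ge0.
have [ub|nub] := pselect (has_ubound A); last first.
  have -> : [set x | A (f x)] = setT.
    apply/seteqP; split => // x _ /=.
    have [b Ab fb] : exists2 b, A b & f x <= b.
      apply: contrapT => H; apply: nub; exists (f x) => b Ab.
      rewrite leNgt; apply/negP => fb; apply: H; exists b => //; exact: ltW.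
    exact: (dA b).
  by rewrite !probability_setT.
have hs : has_sup A by split => //; exists a.
set s := sup A.
have As : [set x | A (f x)] `<=` [set x | f x <= s].
  by move=> x /= Ax; exact: sup_upper_bound.
have sA : [set x | f x < s] `<=` [set x | A (f x)].
  move=> x /= fxs.
  have e0 : 0 < s - f x by rewrite subr_gt0.
  have [b Ab bs] := sup_adherent e0 hs.
  apply: (dA b) => //; apply: ltW; move: bs; rewrite /s; lra.
apply: (le_trans (le_measure _ (mem_set (mpre _ mA)) (mem_set (mle s)) As)).
apply: (le_trans _ (le_measure _ (mem_set (mlt s)) (mem_set (mpre _ mA)) sA)).
have [s0|s0] := ltP s 0.
  have : (P [set x | (f x <= s)%R] <= P [set x | (f x < 0)%R])%E.
    by apply: le_measure; rewrite ?inE //; move=> x /= fs; lra.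
  by rewrite hPb => /le_trans; apply; exact: measure_ge0.
have [s1|s1] := ltP 1 s.
  apply: (le_trans (probability_le1 _ (mle s))).
  rewrite -(hQ 1); last by rewrite ler01 lexx.
  by apply: le_measure; rewrite ?inE //; move=> x /= fs; lra.
apply: (le_trans (hPa s _)); first by rewrite s0 s1.
apply/lee_addgt0Pr => e e0.
have [es|es] := ltP e s.
  have := hQ (s - e); rewrite -leeBlDr //.
  rewrite -EFinB => <-; first by apply: le_measure; rewrite ?inE //; move=> x /= fs; lra.
  by apply/andP; split; lra.
rewrite -leeBlDr // -EFinB.
apply: (le_trans _ (measure_ge0 _ _)).
by rewrite lee_fin; lra.
Qed.

End OneD.

Section Gen.
Variable R : realType.
Variables (d : measure_display) (T : measurableType d).

Lemma measurable_sumn D I (r : seq I) (h : I -> T -> nat) :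
  (forall i, measurable_fun D (h i)) ->
  measurable_fun D (fun x => \sum_(i <- r) h i x)%N.
Proof.
move=> mh; elim: r => [|a r IH].
  under eq_fun do rewrite big_nil; exact: measurable_cst.
under eq_fun do rewrite big_cons; exact: measurable_fun_addn.
Qed.

Lemma bint (mu : probability T R) D (f : T -> R) (B : R) :
  measurable D -> measurable_fun D f -> (forall x, D x -> `|f x| <= B) ->
  mu.-integrable D (EFin \o f).
Proof.
move=> mD mf hB; apply: measurable_bounded_integrable => //.
  by apply: (le_lt_trans (probability_le1 _ mD)); exact: ltry.
exists B; split; first exact: num_real.
move=> N BN x Ax; apply: le_trans (hB x Ax) _; exact: ltW.
Qed.

Lemma phi_bound (phi : nat -> R) M n : (n <= M)%N ->
  `|phi n| <= \sum_(k < M.+1) `|phi k|.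
Proof.
move=> nM; rewrite (bigD1 (Ordinal (n:=M.+1) (m:=n) nM)) //=.
by rewrite lerDl sumr_ge0.
Qed.

Lemma int_phi (mu : probability T R) D (h : T -> nat) (phi : nat -> R) M :
  measurable D -> measurable_fun D h -> (forall x, D x -> (h x <= M)%N) ->
  mu.-integrable D (fun x => (phi (h x))%:E).
Proof.
move=> mD mh hM.
apply: (@bint mu D (phi \o h) (\sum_(k < M.+1) `|phi k|)) => //.
  apply: measurableT_comp => //.
by move=> x Dx; exact: phi_bound (hM x Dx).
Qed.

Lemma phi_layer (phi : nat -> R) M n : (n <= M)%N ->
  phi n = phi 0%N + \sum_(k < M) (phi k.+1 - phi k) * (k < n)%N%:R.
Proof.
move=> nM.
rewrite -(big_mkord xpredT (fun k => (phi k.+1 - phi k) * (k < n)%N%:R)).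
rewrite (@big_cat_nat _ _ _ n) //=.
rewrite [X in _ + (_ + X)]big1_seq; last first.
  move=> k /andP[_]; rewrite mem_index_iota => /andP[nk _].
  by rewrite ltnNge nk mulr0.
rewrite addr0 (eq_big_seq (fun k => phi k.+1 - phi k)); last first.
  by move=> k; rewrite mem_index_iota => /andP[_ ->]; rewrite mulr1.
by rewrite telescope_sumr // addrC subrK.
Qed.

Lemma layer (mu : probability T R) (h : T -> nat) (M : nat) (phi : nat -> R) :
  measurable_fun setT h -> (forall x, (h x <= M)%N) ->
  (\int[mu]_x (phi (h x))%:E =
   (phi 0%N)%:E + \sum_(k < M) (phi k.+1 - phi k)%:E * mu [set x | (k < h x)%N])%E.
Proof.
move=> mh hM.
have mA k : measurable [set x | (k < h x)%N].
  by have := mh measurableT [set n | (k < n)%N] ltac:(done); rewrite setTI.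
have E x : phi (h x) = phi 0%N + \sum_(k < M) (phi k.+1 - phi k) * \1_[set x | (k < h x)%N] x.
  rewrite (phi_layer phi (hM x)); congr (_ + _); apply: eq_bigr => k _.
  rewrite indicE; congr (_ * _); case: (boolP (k < h x)%N) => hk; [by rewrite mem_set|by rewrite memNset //= (negbTE hk)].
under eq_integral do rewrite E EFinD -sumEFin.
rewrite integralD //; last 2 first.
- apply: (@bint mu setT (cst (phi 0%N)) `|phi 0%N|).
  + exact: measurableT.
  + exact: measurable_cst.
  + by move=> x _.
- apply: integrable_sum => // k _.
  apply: (@bint mu setT (fun x => (phi k.+1 - phi k) * \1_[set x | (k < h x)%N] x)
     `|phi k.+1 - phi k|) => //.
    by apply: measurable_funM; [exact: measurable_cst|exact: measurable_indic].
  move=> x _; rewrite normrM indicE; case: (_ \in _); rewrite ?normr1 ?normr0 ?mulr1 ?mulr0 //.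
rewrite integral_cst //; congr (_ + _)%E.
  by rewrite -[RHS]mule1; congr (_ * _)%E; exact: probability_setT.
rewrite integral_sum //; last first.
  move=> k.
  apply: (@bint mu setT (fun x => (phi k.+1 - phi k) * \1_[set x | (k < h x)%N] x)
     `|phi k.+1 - phi k|) => //.
    by apply: measurable_funM; [exact: measurable_cst|exact: measurable_indic].
  move=> x _; rewrite normrM indicE; case: (_ \in _); rewrite ?normr1 ?normr0 ?mulr1 ?mulr0 //.
apply: eq_bigr => k _.
under eq_integral do rewrite EFinM.
rewrite integralZl //; last exact: integrable_indic.
by rewrite integral_indic // setIT.
Qed.

Lemma null_bigU (mu : probability T R) I (r : seq I) (p : pred I) (F : I -> set T) :
  (forall i, p i -> measurable (F i) /\ mu (F i) = 0%E) ->
  measurable (\big[setU/set0]_(i <- r | p i) F i) /\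
  mu (\big[setU/set0]_(i <- r | p i) F i) = 0%E.
Proof.
move=> hF; elim/big_ind: _.
- split; first exact: measurable0.
  exact: measure0.
- move=> A B [mA A0] [mB B0]; split; first exact: measurableU.
  by rewrite null_set_setU.
- exact: hF.
Qed.

Lemma null_sub (mu : probability T R) A B : measurable A -> measurable B ->
  A `<=` B -> mu B = 0%E -> mu A = 0%E.
Proof.
move=> mA mB AB B0; apply/eqP; rewrite eq_le measure_ge0 andbT -B0.
by apply: le_measure; rewrite ?inE.
Qed.

End Gen.

Section Main.
Variable R : realType.
Variables (m m0 : nat) (hm0 : (m0 <= m)%N).

Definition proj (x : m.-tuple R) : m0.-tuple R := [tuple tnth x (widen_ord hm0 i) | i < m0].
Definition ext (y : m0.-tuple R) : m.-tuple R := [tuple nth 0 y j | j < m].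
Definition clamp01 (a : R) : R := Num.min (Num.max a 0) 1.
Definition clampt (y : m0.-tuple R) : m0.-tuple R := [tuple clamp01 (tnth y i) | i < m0].
Definition Ef y := ext (clampt y).

Lemma tnth_proj x i : tnth (proj x) i = tnth x (widen_ord hm0 i).
Proof. by rewrite tnth_mktuple. Qed.

Lemma tnth_ext_lt y (j : 'I_m) (hj : (j < m0)%N) : tnth (ext y) j = tnth y (Ordinal hj).
Proof. by rewrite tnth_mktuple (tnth_nth 0). Qed.

Lemma tnth_ext_ge y (j : 'I_m) : (m0 <= j)%N -> tnth (ext y) j = 0.
Proof. by move=> hj; rewrite tnth_mktuple nth_default // size_tuple. Qed.

Lemma clamp01_in a : 0 <= clamp01 a <= 1.
Proof.
rewrite /clamp01; apply/andP; split.
  by rewrite le_min ler01 le_max lexx orbT.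
by rewrite ge_min lexx orbT.
Qed.

Lemma clamp01_id a : 0 <= a <= 1 -> clamp01 a = a.
Proof.
move=> /andP[a0 a1]; rewrite /clamp01.
rewrite (_ : Num.max a 0 = a); last by apply/max_idPl.
by apply/min_idPl.
Qed.

Lemma clamp01_le a b : a <= b -> clamp01 a <= clamp01 b.
Proof.
move=> ab; rewrite /clamp01; apply: le_min2 => //; exact: le_max2.
Qed.

Lemma Ef_cube y : cube m (Ef y).
Proof.
move=> j; have [hj|hj] := ltnP j m0.
  by rewrite /Ef tnth_ext_lt tnth_mktuple clamp01_in.
by rewrite /Ef tnth_ext_ge // lexx ler01.
Qed.

Variable t : m.-tuple R -> R.
Hypothesis ht_noninc : forall (x y : m.-tuple R) (i : 'I_m), cube m x -> cube m y ->
        (forall j, j != i -> tnth x j = tnth y j) ->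
        tnth x i <= tnth y i -> t y <= t x.

Lemma tmono x y : cube m x -> cube m y -> (forall i, tnth x i <= tnth y i) ->
  t y <= t x.
Proof.
move=> cx cy xy.
pose z k : m.-tuple R := [tuple if (j < k)%N then tnth y j else tnth x j | j < m].
have zc k : cube m (z k).
  by move=> j; rewrite tnth_mktuple; case: ifP => _; [exact: cy|exact: cx].
have z0 : z 0%N = x by apply: eq_from_tnth => j; rewrite tnth_mktuple.
have zm : z m = y by apply: eq_from_tnth => j; rewrite tnth_mktuple ltn_ord.
suff H : forall k, (k <= m)%N -> t (z k) <= t x by rewrite -zm; exact: H.
elim => [|k IH] hk; first by rewrite z0.
apply: le_trans (IH (ltnW hk)).
apply: (ht_noninc (i := Ordinal hk)) => //.
  move=> j jk; rewrite !tnth_mktuple.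
  have jk' : ((j : nat) != k) by apply: contra jk => /eqP jk; apply/eqP/val_inj.
  by rewrite [in RHS]ltnS [in RHS]leq_eqVlt (negbTE jk').
by rewrite !tnth_mktuple /= ltnn ltnSn; exact: xy.
Qed.

Definition gV (y : m0.-tuple R) : nat := Vrej m0 t (Ef y).

Lemma card_sum (P : pred 'I_m) : #|[set i | P i]| = (\sum_(i < m) P i)%N.
Proof.
rewrite -sum1_card big_mkcond /=; apply: eq_bigr => i _.
by case: (boolP (P i)) => hP; [rewrite mem_set|rewrite memNset //= (negbTE hP)].
Qed.

Lemma card_le (P Q : pred 'I_m) : (forall i, P i -> Q i) ->
  (#|[set i | P i]| <= #|[set i | Q i]|)%N.
Proof.
move=> PQ; rewrite !card_sum; apply: leq_sum => i _.
by case: (boolP (P i)) => // /PQ ->.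
Qed.

Lemma Vrej_le x : (Vrej m0 t x <= m)%N.
Proof. by rewrite /Vrej (leq_trans (max_card _)) // card_ord. Qed.

Lemma Ef_proj_le x : cube m x -> forall i, tnth (Ef (proj x)) i <= tnth x i.
Proof.
move=> cx i; have [hi|hi] := ltnP i m0.
  rewrite /Ef tnth_ext_lt tnth_mktuple tnth_proj clamp01_id; last exact: cx.
  by rewrite (_ : widen_ord hm0 (Ordinal hi) = i) //; apply: val_inj.
by rewrite /Ef tnth_ext_ge //; have /andP[] := cx i.
Qed.

Lemma Ef_proj_lt x (i : 'I_m) : cube m x -> (i < m0)%N -> tnth (Ef (proj x)) i = tnth x i.
Proof.
move=> cx hi.
rewrite /Ef tnth_ext_lt tnth_mktuple tnth_proj clamp01_id; last exact: cx.
by rewrite (_ : widen_ord hm0 (Ordinal hi) = i) //; apply: val_inj.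
Qed.

Lemma F1 x : cube m x -> (Vrej m0 t x <= gV (proj x))%N.
Proof.
move=> cx; rewrite /gV /Vrej; apply: card_le => i.
move=> /andP[hi xi]; rewrite hi /= Ef_proj_lt //.
apply: le_trans xi _; apply: tmono => //; first exact: Ef_cube.
exact: Ef_proj_le.
Qed.

Lemma F2 x : cube m x -> (forall j : 'I_m, (m0 <= j)%N -> tnth x j = 0) ->
  Vrej m0 t x = gV (proj x).
Proof.
move=> cx hx; rewrite /gV; congr (Vrej m0 t _).
apply: eq_from_tnth => j; have [hj|hj] := ltnP j m0.
  by rewrite Ef_proj_lt.
by rewrite hx // /Ef tnth_ext_ge.
Qed.

Lemma Ef_mono y y' : (forall i, tnth y' i <= tnth y i) ->
  forall j, tnth (Ef y') j <= tnth (Ef y) j.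
Proof.
move=> yy j; have [hj|hj] := ltnP j m0.
  by rewrite /Ef !tnth_ext_lt !tnth_mktuple clamp01_le.
by rewrite /Ef !tnth_ext_ge.
Qed.

Lemma F3 k : downT [set y : m0.-tuple R | (k < gV y)%N].
Proof.
move=> y y' /= ky yy; apply: (leq_trans ky).
rewrite /gV /Vrej; apply: card_le => i.
move=> /andP[-> xi] /=.
apply: le_trans (Ef_mono yy i) _; apply: le_trans xi _.
apply: tmono; [exact: Ef_cube|exact: Ef_cube|exact: Ef_mono].
Qed.


Lemma mcube : measurable (@cube R m).
Proof.
have -> : @cube R m = \bigcap_(i in [set: 'I_m]) ((fun x : m.-tuple R => tnth x i) @^-1` `[0, 1]).
  apply/seteqP; split => x /=.
    by move=> cx i _ /=; rewrite in_itv /=; exact: cx.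
  by move=> H i; have := H i I; rewrite /= in_itv.
apply: fin_bigcap_measurable; first exact: finite_finset.
move=> i _; rewrite -[X in measurable X]setTI; exact: measurable_tnth.
Qed.

Lemma mclamp : measurable_fun setT clamp01.
Proof.
have -> : clamp01 = (idfun \max cst 0) \min cst 1 by [].
apply: measurable_minr; last exact: measurable_cst.
apply: measurable_maxr; [exact: measurable_id|exact: measurable_cst].
Qed.

Lemma mEf : measurable_fun setT Ef.
Proof.
apply/measurable_fun_tnthP => j.
have [hj|hj] := ltnP j m0.
  rewrite (_ : _ \o _ = clamp01 \o (fun y : m0.-tuple R => tnth y (Ordinal hj))).
    apply: measurableT_comp; [exact: mclamp|exact: measurable_tnth].
  by apply/funext => y /=; rewrite /Ef tnth_ext_lt tnth_mktuple.
rewrite (_ : _ \o _ = cst 0); first exact: measurable_cst.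
by apply/funext => y /=; rewrite /Ef tnth_ext_ge.
Qed.

Lemma mproj : measurable_fun setT proj.
Proof.
apply/measurable_fun_tnthP => i.
rewrite (_ : _ \o _ = (fun x : m.-tuple R => tnth x (widen_ord hm0 i))).
  exact: measurable_tnth.
by apply/funext => x /=; rewrite tnth_proj.
Qed.

Hypothesis ht_meas : measurable_fun (cube m) t.

Lemma mtEf : measurable_fun setT (t \o Ef).
Proof.
apply: (measurable_comp (F := cube m)) => //.
- exact: mcube.
- by move=> _ [y _ <-]; exact: Ef_cube.
- exact: mEf.
Qed.

Lemma Vrej_sum x : Vrej m0 t x = (\sum_(i < m) ((i < m0)%N && (tnth x i <= t x)%R))%N.
Proof. by rewrite /Vrej card_sum. Qed.

Lemma mbool d (T : measurableType d) D (f : bool -> nat) (b : T -> bool) :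
  measurable_fun D b -> measurable_fun D (f \o b).
Proof. by move=> mb; apply: measurableT_comp => //. Qed.

Lemma mgV : measurable_fun setT gV.
Proof.
rewrite (_ : gV = fun y => \sum_(i < m) (nat_of_bool \o (fun y =>
   (i < m0)%N && (tnth (Ef y) i <= t (Ef y))%R)) y)%N; last first.
  by apply/funext => y; rewrite /gV Vrej_sum.
apply: measurable_sumn => i; apply: mbool.
apply: measurable_and; first exact: measurable_cst.
apply: measurable_fun_ler; last exact: mtEf.
apply: (measurableT_comp (f := fun x : m.-tuple R => tnth x i) (g := Ef)); [exact: measurable_tnth|exact: mEf].
Qed.

Lemma mVrej : measurable_fun (cube m) (Vrej m0 t).
Proof.
rewrite (_ : Vrej m0 t = fun x => \sum_(i < m) (nat_of_bool \o (fun x =>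
   (i < m0)%N && (tnth x i <= t x)%R)) x)%N; last first.
  by apply/funext => x; rewrite Vrej_sum.
apply: measurable_sumn => i; apply: mbool.
apply: measurable_and; first exact: measurable_cst.
apply: measurable_fun_ler => //.
apply: measurable_funTS; exact: measurable_tnth.
Qed.

End Main.

HB.instance Definition _ (R : realType) m m0 (hm0 : (m0 <= m)%N) :=
  isMeasurableFun.Build _ _ _ _ (@proj R m m0 hm0) (@mproj R m m0 hm0).

Section Aux.
Variable R : realType.
Variables (d : measure_display) (T : measurableType d).

Lemma int_cube (mu : probability T R) C f : measurable C -> mu (~` C) = 0%E ->
  mu.-integrable setT f -> (\int[mu]_(x in C) f x = \int[mu]_x f x)%E.
Proof.
move=> mC C0 intf.
by rewrite (negligible_integral (measurableC mC) measurableT intf C0) setTD setCK.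
Qed.

End Aux.

Section Fin.
Variable R : realType.
Variables (m m0 : nat) (hm0 : (m0 <= m)%N).

Lemma widen_inj : injective (widen_ord hm0).
Proof. by move=> i j /(congr1 val) /= ij; apply: val_inj. Qed.

Lemma tindep_proj (P : probability (m.-tuple R) R) :
  first_coords_indep m0 P -> tindep (distribution P (@proj R m m0 hm0)).
Proof.
move=> hind B mB.
pose S : {set 'I_m} := (widen_ord hm0 @: [set: 'I_m0])%SET.
pose B' (j : 'I_m) := [set a : R | forall i : 'I_m0, widen_ord hm0 i = j -> B i a].
have B'w i : B' (widen_ord hm0 i) = B i.
  apply/seteqP; split => a /=; first by apply.
  by move=> Ba k /widen_inj ->.
have mB' j : measurable (B' j).
  have [[i <-]|ni] := pselect (exists i, widen_ord hm0 i = j).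
    by rewrite B'w.
  rewrite (_ : B' j = setT); first exact: measurableT.
  by apply/seteqP; split => // a _ i ij; exfalso; apply: ni; exists i.
have hS j : j \in S -> (j < m0)%N.
  by case/imsetP => i _ ->; rewrite /= ltn_ord.
have := hind S B' mB' hS.
rewrite /= /pushforward.
move=> H.
transitivity (P [set x | forall j, j \in S -> B' j (tnth x j)]).
  congr (P _); apply/seteqP; split => x /=.
    move=> Bx j /imsetP[i _ ->]; rewrite B'w -tnth_proj; exact: Bx.
  move=> H' i; rewrite tnth_proj -B'w; apply: H'.
  by apply/imsetP; exists i.
rewrite H big_imset /=; last by move=> i j _ _; exact: widen_inj.
rewrite (eq_bigl xpredT); last by move=> i; rewrite inE.
apply: eq_bigr => i _; rewrite B'w.
congr (P _); apply/seteqP; split => x /=; by rewrite tnth_proj.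
Qed.


Lemma Q_cube (Q : probability (m.-tuple R) R) : is_DU m0 Q ->
  Q (~` @cube R m) = 0%E.
Proof.
case=> _ hU hZ.
have pre (i : 'I_m) (B : set R) : measurable B ->
    measurable [set x : m.-tuple R | B (tnth x i)].
  move=> mB; rewrite -[X in measurable X]setTI.
  exact: (measurable_tnth i measurableT mB).
have mle (i : 'I_m) (u : R) : measurable [set x : m.-tuple R | tnth x i <= u].
  have := pre i _ (measurable_itv `]-oo, u]).
  by congr measurable; apply/seteqP; split => x; rewrite /= in_itv.
have mlt (i : 'I_m) (u : R) : measurable [set x : m.-tuple R | tnth x i < u].
  have := pre i _ (measurable_itv `]-oo, u[).
  by congr measurable; apply/seteqP; split => x; rewrite /= in_itv.
have mgt (i : 'I_m) (u : R) : measurable [set x : m.-tuple R | u < tnth x i].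
  have := pre i _ (measurable_itv `]u, +oo[).
  by congr measurable; apply/seteqP; split => x; rewrite /= in_itv /= andbT.
have meq (i : 'I_m) : measurable [set x : m.-tuple R | tnth x i = 0].
  exact: (pre i _ (measurable_set1 0)).
pose F (i : 'I_m) := [set x : m.-tuple R | tnth x i < 0] `|` [set x | 1 < tnth x i].
have hF : forall i, xpredT i -> measurable (F i) /\ Q (F i) = 0%E.
  move=> i _; split; first exact: measurableU.
  have [hi|hi] := ltnP i m0.
    apply: null_set_setU => //.
      apply: (@null_sub R _ _ Q _ [set x | tnth x i <= 0]) => //.
        by move=> x /= /ltW.
      by rewrite hU // lexx ler01.
    apply: (@null_sub R _ _ Q _ (~` [set x | tnth x i <= 1])) => //.
    - exact: measurableC.
    - by move=> x /=; rewrite ltNge => /negP.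
    - apply: (etrans (probability_setC Q (mle i 1))).
      by rewrite hU ?lexx ?ler01 // subee.
  apply: (@null_sub R _ _ Q _ (~` [set x | tnth x i = 0])) => //.
  - exact: measurableU.
  - exact: measurableC.
  - by move=> x [] /= h h0; move: h; rewrite h0 ?ltxx // ltr10.
  - apply: (etrans (probability_setC Q (meq i))).
    by rewrite hZ // subee.
have [mU U0] := @null_bigU R _ _ Q _ (index_enum 'I_m) xpredT F hF.
apply: (@null_sub R _ _ Q _ _ (measurableC (@mcube R m)) mU) => // x /= ncx.
rewrite -bigcup_seq_cond.
have [i ni] : exists i, ~ (0 <= tnth x i <= 1).
  apply: contrapT => H; apply: ncx => i; apply: contrapT => ni; apply: H; exists i.
  exact: ni.
exists i; first by rewrite /= mem_index_enum.
rewrite /F /=; move: ni; case: (leP 0 (tnth x i)) => h0 /=.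
  by move=> h1; right; rewrite ltNge; apply/negP.
by move=> _; left.
Qed.

End Fin.

Unset Implicit Arguments.

Theorem lemmaC1 (R : realType) (m m0 : nat) (hm : (1 <= m)%N) (hm0 : (m0 <= m)%N)
    (P : probability (m.-tuple R) R)
    (hPsupp : P (cube m) = 1%E)
    (hPind : first_coords_indep m0 P)
    (hPsup : forall i : 'I_m, (i < m0)%N -> forall u : R, 0 <= u <= 1 ->
               (P [set x : m.-tuple R | (tnth x i <= u)%R] <= u%:E)%E)
    (t : m.-tuple R -> R)
    (ht_meas : measurable_fun (cube m) t)
    (ht_range : forall x, cube m x -> 0 <= t x <= 1)
    (ht_noninc : forall (x y : m.-tuple R) (i : 'I_m), cube m x -> cube m y ->
        (forall j, j != i -> tnth x j = tnth y j) ->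
        tnth x i <= tnth y i -> t y <= t x)
    (phi : nat -> R) (hphi : {homo phi : a b / (a <= b)%N >-> a <= b})
    (Q : probability (m.-tuple R) R) (hQ : is_DU m0 Q) :
  (risk m0 phi t P <= risk m0 phi t Q)%E.
Proof.
pose g := @gV R m m0 t.
pose G := fun x => g (proj hm0 x).
have mg : measurable_fun setT g := mgV ht_meas.
have mG : measurable_fun setT G.
  exact: (measurableT_comp mg (mproj hm0)).
have Gle x : (G x <= m)%N by exact: Vrej_le.
have mc : measurable (@cube R m) := @mcube R m.
have PC : P (~` @cube R m) = 0%E.
  apply: (etrans (probability_setC P mc)).
  by rewrite hPsupp subee.
have QC : Q (~` @cube R m) = 0%E := Q_cube hQ.
have [hQ1 hQ2 hQ3] := hQ.
have key : (\int[P]_x (phi (G x))%:E <= \int[Q]_x (phi (G x))%:E)%E.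
  rewrite (layer P phi mG Gle) (layer Q phi mG Gle).
  rewrite leeD2l // lee_sum // => k _.
  rewrite lee_wpmul2l //; first by rewrite lee_fin subr_ge0; apply: hphi.
  have mD : measurable [set y : m0.-tuple R | (k < g y)%N].
    by have := mg measurableT [set n | (k < n)%N] ltac:(done); rewrite setTI.
  have hsdom : sdom (distribution P (proj hm0)) (distribution Q (proj hm0)).
    move=> i A mA dA.
    have hw : (widen_ord hm0 i < m0)%N by rewrite /= ltn_ord.
    have mlt0 : measurable [set x : m.-tuple R | tnth x (widen_ord hm0 i) < 0].
      rewrite (_ : [set x | _] = (fun x : m.-tuple R => tnth x (widen_ord hm0 i)) @^-1` `]-oo, 0[); last first.
        by apply/seteqP; split => x; rewrite /= in_itv.
      rewrite -[X in measurable X]setTI.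
      exact: (measurable_tnth (widen_ord hm0 i) measurableT (measurable_itv _)).
    have hb : P [set x | (tnth x (widen_ord hm0 i) < 0)%R] = 0%E.
      apply: (@null_sub R _ _ P _ (~` @cube R m)) => //.
        exact: measurableC.
      move=> x /= x0 cx; have := cx (widen_ord hm0 i); rewrite leNgt x0 //.
    have := oneD (P:=P) (Q:=Q) (f := fun x => tnth x (widen_ord hm0 i))
      (measurable_tnth _) (hPsup _ hw) hb (hQ2 _ hw) mA dA.
    have E1 : [set x | A (tnth (proj hm0 x) i)] = [set x | A (tnth x (widen_ord hm0 i))].
      by apply/seteqP; split => x /=; rewrite tnth_proj.
    move=> H; apply: (le_trans _ (le_trans H _)).
      by rewrite -E1; apply: lexx.
    by rewrite -E1; apply: lexx.
  exact: (KL (tindep_proj hm0 hPind) (tindep_proj hm0 hQ1) hsdom mD (F3 ht_noninc (k:=k))).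
rewrite /risk.
have intVP : P.-integrable (cube m) (fun x => (phi (Vrej m0 t x))%:E).
  exact: (int_phi P phi mc (mVrej m0 ht_meas) (fun x _ => Vrej_le m0 t x)).
have intVQ : Q.-integrable (cube m) (fun x => (phi (Vrej m0 t x))%:E).
  exact: (int_phi Q phi mc (mVrej m0 ht_meas) (fun x _ => Vrej_le m0 t x)).
have intGP : P.-integrable (cube m) (fun x => (phi (G x))%:E).
  exact: (int_phi P phi mc (measurable_funTS mG) (fun x _ => Gle x)).
have intGQ : Q.-integrable (cube m) (fun x => (phi (G x))%:E).
  exact: (int_phi Q phi mc (measurable_funTS mG) (fun x _ => Gle x)).
have intGPT : P.-integrable setT (fun x => (phi (G x))%:E).
  exact: (int_phi P phi measurableT mG (fun x _ => Gle x)).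
have intGQT : Q.-integrable setT (fun x => (phi (G x))%:E).
  exact: (int_phi Q phi measurableT mG (fun x _ => Gle x)).
have h1 : (\int[P]_(x in cube m) (phi (Vrej m0 t x))%:E <=
    \int[P]_(x in cube m) (phi (G x))%:E)%E.
  apply: le_integral => //.
  move=> x /set_mem cx /=; rewrite lee_fin; apply: hphi.
  exact: (F1 hm0 ht_noninc cx).
apply: (le_trans h1).
rewrite (int_cube mc PC intGPT).
apply: (le_trans key).
rewrite -(int_cube mc QC intGQT).
pose N := \big[setU/set0]_(j < m | (m0 <= j)%N) [set x : m.-tuple R | tnth x j != 0].
have [mN QN] : measurable N /\ Q N = 0%E.
  apply: null_bigU => j hj.
  have m0j : measurable [set x : m.-tuple R | tnth x j = 0].
    rewrite (_ : [set x | _] = (fun x : m.-tuple R => tnth x j) @^-1` [set 0]) //.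
    rewrite -[X in measurable X]setTI.
    exact: (measurable_tnth j measurableT (measurable_set1 _)).
  have mneq : measurable [set x : m.-tuple R | tnth x j != 0].
    rewrite (_ : [set x | _] = ~` [set x : m.-tuple R | tnth x j = 0]).
      exact: measurableC.
    by apply/seteqP; split => x /=; [move/eqP|move/eqP].
  split => //.
  apply: (@null_sub R _ _ Q _ (~` [set x : m.-tuple R | tnth x j = 0])) => //.
  - exact: measurableC.
  - by move=> x /= /eqP.
  - apply: (etrans (probability_setC Q m0j)).
    by rewrite hQ3 // subee.
rewrite (negligible_integral mN mc intGQ QN) (negligible_integral mN mc intVQ QN).
rewrite (eq_integral (fun x => (phi (Vrej m0 t x))%:E)); first exact: lexx.
move=> x /set_mem [cx nNx]; congr (_%:E); congr phi; symmetry.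
apply: (F2 hm0 t cx) => j hj; apply: contrapT => /eqP xj; apply: nNx.
rewrite /N -bigcup_seq_cond; exists j => //=.
by rewrite mem_index_enum hj.
Qed.
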